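(* Let $X,Y,A,B$ be non-empty finite sets. Then $\mathsf{QC}(\mathcal R_{\rm loc})=\mathcal Q_{\rm loc}$.
   Context: For a block operator isometry $W=(W_{c,z})_{c\in C,z\in Z}:H^Z\to K^C$ (entries $W_{c,z}\in\mathcal B(H,K)$) and a normal state $\sigma$ on $\mathcal B(H)$, $\Gamma_{W,\sigma}:M_Z\to M_C$ is the channel $\Gamma_{W,\sigma}(\epsilon_{z,z'})=\sum_{c,c'}\sigma(W_{c,z}^*W_{c',z'})\epsilon_{c,c'}$; for a family $\mathcal R$, $\mathsf{QC}(\mathcal R)=\{\Gamma_{W,\sigma}:W\in\mathcal R,\sigma\text{ normal state}\}$. An isometry $U:\mathbb C^X\to\mathbb C^A\otimes\mathbb C^S$ ($S$ finite) is regarded as a block operator isometry over $(X,A)$ with entries $U_{a,x}\in\mathcal B(\mathbb C,\mathbb C^S)$ determined by $Ue_x=\sum_a e_a\otimes U_{a,x}$; similarly $V:\mathbb C^Y\to\mathbb C^B\otimes\mathbb C^T$. Then $U\otimes V$ is the block operator isometry over $(X\times Y,A\times B)$ with entries $U_{a,x}\otimes V_{b,y}$. $\mathcal R_{\rm loc}$ is the set of all finite direct sums (entrywise) of such $U\otimes V$, over all finite sets $S,T$ and all isometries $U,V$. $\mathcal Q_{\rm loc}$ is the set of convex combinations $\sum_i\lambda_i\Phi_i\otimes\Psi_i$, where $\Phi_i:M_X\to M_A$ and $\Psi_i:M_Y\to M_B$ are quantum channels (completely positive trace preserving maps). *)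

(* Defs.v *)
(* All Hilbert spaces occurring in
   the statement are finite dimensional C^I, I a finType; operators
   C^J -> C^I are matrices, represented as functions I -> J -> C. *)
From HB Require Import structures.
From mathcomp Require Import all_boot all_order all_algebra.
From mathcomp Require Import reals complex.
Set Implicit Arguments. Unset Strict Implicit. Unset Printing Implicit Defensive.
Import Order.TTheory GRing.Theory Num.Theory.
Local Open Scope ring_scope.
Local Open Scope complex_scope.

Section QCDefs.
Variable R : realType.
Local Notation C := R[i].

Definition mx (I J : Type) := I -> J -> C.

Definition mxmul (I J K : finType) (M : mx I J) (N : mx J K) : mx I K :=
  fun i k => \sum_j M i j * N j k.
Definition adj (I J : Type) (M : mx I J) : mx J I := fun j i => (M i j)^*.
Definition idm (I : finType) : mx I I := fun i j => (i == j)%:R.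
Definition mtr (I : finType) (M : mx I I) : C := \sum_i M i i.
Definition eunit (I : finType) (x x' : I) : mx I I :=
  fun i j => ((i == x) && (j == x'))%:R.
Definition psd (I : finType) (M : mx I I) : Prop :=
  forall v : I -> C, 0 <= \sum_i \sum_j (v i)^* * M i j * v j.
Definition isometry (I J : finType) (U : mx I J) : Prop :=
  forall j j', mxmul (adj U) U j j' = @idm J j j'.

Definition linear_map (I J : finType) (Phi : mx I I -> mx J J) : Prop :=
  forall (a : C) (rho sigma : mx I I) j j',
    Phi (fun x y => a * rho x y + sigma x y) j j' = a * Phi rho j j' + Phi sigma j j'.
(* completely positive: id_{M_n} (x) Phi is positive for every n *)
Definition completely_positive (I J : finType) (Phi : mx I I -> mx J J) : Prop :=
  forall (n : nat) (rho : mx ('I_n * I) ('I_n * I)), psd rho ->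
    psd (fun (p q : 'I_n * J) => Phi (fun x y => rho (p.1, x) (q.1, y)) p.2 q.2).
Definition trace_preserving (I J : finType) (Phi : mx I I -> mx J J) : Prop :=
  forall rho, mtr (Phi rho) = mtr rho.
Definition quantum_channel (I J : finType) (Phi : mx I I -> mx J J) : Prop :=
  [/\ linear_map Phi, completely_positive Phi & trace_preserving Phi].

(* Phi (x) Psi : M_{X x Y} -> M_{A x B}, the linear extension of
   eps_{x,x'} (x) eps_{y,y'} |-> Phi(eps_{x,x'}) (x) Psi(eps_{y,y'}) *)
Definition tensor_map (X Y A B : finType) (Phi : mx X X -> mx A A)
    (Psi : mx Y Y -> mx B B) : mx (X * Y) (X * Y) -> mx (A * B) (A * B) :=
  fun rho p q => \sum_x \sum_x' \sum_y \sum_y'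
     rho (x, y) (x', y') * Phi (eunit x x') p.1 q.1 * Psi (eunit y y') p.2 q.2.

Definition Qloc (X Y A B : finType)
    (Phi : mx (X * Y) (X * Y) -> mx (A * B) (A * B)) : Prop :=
  exists (J : finType) (lam : J -> R)
         (Phis : J -> mx X X -> mx A A) (Psis : J -> mx Y Y -> mx B B),
    [/\ forall j, 0 <= lam j,
        \sum_j lam j = 1,
        forall j, quantum_channel (Phis j),
        forall j, quantum_channel (Psis j) &
        forall rho p q, Phi rho p q =
          \sum_j (lam j)%:C * tensor_map (Phis j) (Psis j) rho p q].

(* block operator W = (W_{c,z}) : H^Z -> K^Cc, entries W_{c,z} in B(C^H, C^K) *)
Definition block_op (Cc Z H K : Type) := Cc -> Z -> mx K H.

(* (normal) state on B(C^H): positive unital linear functional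
   (in finite dimension every state is normal) *)
Definition state (H : finType) (sigma : mx H H -> C) : Prop :=
  [/\ forall (a : C) (S T : mx H H),
        sigma (fun x y => a * S x y + T x y) = a * sigma S + sigma T,
      forall T : mx H H, 0 <= sigma (mxmul (adj T) T) &
      sigma (@idm H) = 1].

Definition Gamma (Cc Z H K : finType) (W : block_op Cc Z H K)
    (sigma : mx H H -> C) : mx Z Z -> mx Cc Cc :=
  fun rho c c' => \sum_z \sum_z' rho z z' * sigma (mxmul (adj (W c z)) (W c' z')).

(* The entrywise direct sum over i in I of U_i (x) V_i, where
   U_i : C^X -> C^A (x) C^(S i),  V_i : C^Y -> C^B (x) C^(T i)
   (so (U_i)_{a,x} = (s |-> U_i (a,s) x) in B(C, C^(S i))).
   It is a block operator over (X x Y, A x B) with H = C^I (direct sum of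
   copies of C (x) C) and K = C^{(+)_i S i x T i}. *)
Definition locW (X Y A B I : finType) (S T : I -> finType)
    (U : forall i, mx (A * S i) X) (V : forall i, mx (B * T i) Y) :
    block_op (A * B) (X * Y) I {i : I & (S i * T i)%type} :=
  fun c z k j => (tag k == j)%:R * U (tag k) (c.1, (tagged k).1) z.1
                                 * V (tag k) (c.2, (tagged k).2) z.2.

Definition QC_Rloc (X Y A B : finType)
    (Phi : mx (X * Y) (X * Y) -> mx (A * B) (A * B)) : Prop :=
  exists (I : finType) (S T : I -> finType)
         (U : forall i, mx (A * S i) X) (V : forall i, mx (B * T i) Y)
         (sigma : mx I I -> C),
    [/\ forall i, isometry (U i),
        forall i, isometry (V i),
        state sigma &
        forall rho p q, Phi rho p q = Gamma (locW U V) sigma rho p q].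

End QCDefs.

(* Main.v *)
From HB Require Import structures.
From Stdlib Require Import FunctionalExtensionality ClassicalEpsilon.
From mathcomp Require Import all_boot all_order all_algebra.
From mathcomp Require Import reals complex ring.
Require Import Defs.
Set Implicit Arguments. Unset Strict Implicit. Unset Printing Implicit Defensive.
Import Order.TTheory GRing.Theory Num.Theory.
Local Open Scope ring_scope.

Section S. Variable R : realType.
Local Notation C := R[i].
Lemma conjcE (x : C) : conjc x = x^*. Proof. by []. Qed.
Lemma exch2 (A B : finType) (F : A -> B -> C) :
  \sum_a \sum_b F a b = \sum_b \sum_a F a b.
Proof. exact: exchange_big. Qed.



Lemma sum_dr (I : finType) (F : I -> C) i : \sum_l F l * (l == i)%:R = F i.
Proof. by rewrite (bigD1 i) //= eqxx mulr1 big1 ?addr0 // => l /negbTE ->; rewrite mulr0. Qed.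
Lemma sum_dl (I : finType) (F : I -> C) i : \sum_l (l == i)%:R * F l = F i.
Proof. by rewrite (bigD1 i) //= eqxx mul1r big1 ?addr0 // => l /negbTE ->; rewrite mul0r. Qed.

Definition qf (I : finType) (M : mx R I I) (v : I -> C) :=
  \sum_i \sum_j (v i)^* * M i j * v j.

Lemma psdE (I : finType) (M : mx R I I) : psd M <-> forall v, 0 <= qf M v.
Proof. by []. Qed.

Lemma qf_add (I : finType) (M : mx R I I) v c i :
  qf M (fun k => v k + c * (k == i)%:R) =
  qf M v + c^* * (\sum_l M i l * v l) + c * (\sum_k (v k)^* * M k i)
  + c^* * c * M i i.
Proof.
rewrite /qf.
have E k l : (v k + c * (k == i)%:R)^* * M k l * (v l + c * (l == i)%:R) =
  (v k)^* * M k l * v l + ((v k)^* * M k l * c) * (l == i)%:R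
  + (k == i)%:R * (c^* * M k l * v l) + (k == i)%:R * ((c^* * M k l * c) * (l == i)%:R).
  rewrite rmorphD rmorphM /= conjC_nat; ring.
under eq_bigr do under eq_bigr do rewrite E.
under eq_bigr do rewrite !big_split /= sum_dr -!mulr_sumr sum_dr.
rewrite !big_split /= !sum_dl.
rewrite !mulr_sumr -!addrA; congr (_ + _); rewrite addrCA; congr (_ + _).
  by apply: eq_bigr => k _; ring.
congr (_ + _); last by ring.
by apply: eq_bigr => k _; ring.
Qed.

Lemma qf0 (I : finType) (M : mx R I I) : qf M (fun _ => 0) = 0.
Proof. by rewrite /qf big1 // => i _; rewrite big1 // => j _; rewrite mulr0. Qed.


Lemma sum_vdelta (I : finType) (F : I -> C) a i :
  \sum_l F l * (0 + a * (l == i)%:R) = F i * a.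
Proof. by under eq_bigr do rewrite add0r mulrCA; rewrite -mulr_sumr sum_dr mulrC. Qed.

Lemma sum_cdelta (I : finType) (F : I -> C) a i :
  \sum_k (0 + a * (k == i)%:R)^* * F k = a^* * F i.
Proof.
under eq_bigr do rewrite add0r rmorphM /= conjC_nat -mulrA.
by rewrite -mulr_sumr sum_dl.
Qed.

Lemma qf_delta (I : finType) (M : mx R I I) c i :
  qf M (fun k => 0 + c * (k == i)%:R) = c^* * c * M i i.
Proof.
rewrite qf_add qf0 big1 ?big1 ?mulr0 ?add0r // => k _.
  by rewrite rmorph0 mul0r.
by rewrite mulr0.
Qed.

Lemma qf_two (I : finType) (M : mx R I I) a b i j :
  qf M (fun k => (0 + a * (k == i)%:R) + b * (k == j)%:R) =
  a^* * a * M i i + b^* * (M j i * a) + b * (a^* * M i j) + b^* * b * M j j.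
Proof. by rewrite qf_add qf_delta sum_vdelta sum_cdelta. Qed.

Lemma psd_diag (I : finType) (M : mx R I I) i : psd M -> 0 <= M i i.
Proof. by move=> /(_ (fun k => 0 + 1 * (k == i)%:R)); rewrite -/(qf _ _) qf_delta rmorph1 !mul1r. Qed.

Lemma psd_herm (I : finType) (M : mx R I I) i j : psd M -> M j i = (M i j)^*.
Proof.
move=> hM; have [->|nij] := eqVneq i j; first by rewrite geC0_conj // psd_diag.
have h1 := hM (fun k => (0 + 1 * (k == i)%:R) + 1 * (k == j)%:R).
have h2 := hM (fun k => (0 + 1 * (k == i)%:R) + 'i * (k == j)%:R).
rewrite -/(qf _ _) qf_two in h1; rewrite -/(qf _ _) qf_two in h2.
move/geC0_conj: h1; move/geC0_conj: h2.
have di := geC0_conj (psd_diag i hM); have dj := geC0_conj (psd_diag j hM).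
rewrite !rmorph1 !(rmorphD, rmorphM, rmorphN) /= !rmorph1 ?conjCi ?opprK ?conjCK di dj !mul1r !mulr1.
have ci : (- 'i : C)^* = 'i by rewrite rmorphN /= conjCi opprK.
rewrite ci.
set s := M i j; set t := M j i => h2 h1.
have e2 : t^* - s^* = s - t.
  apply: (mulfI (neq0Ci C)); apply/eqP; rewrite -subr_eq0.
  have -> : 'i * (t^* - s^*) - 'i * (s - t) =
    (M i i + 'i * t^* + - 'i * s^* + 'i * - 'i * M j j) -
    (M i i + - 'i * t + 'i * s + - 'i * 'i * M j j) by ring.
  by rewrite h2 subrr.
have : (s^* - t) *+ 2 = 0.
  have -> : (s^* - t) *+ 2 = (M i i + t^* + s^* + M j j) - (M i i + t + s + M j j)
     - (t^* - s^*) + (s - t) by rewrite mulr2n; ring.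
  by rewrite e2 h1 !subrr sub0r addNr.
by move/eqP; rewrite mulrn_eq0 /= subr_eq0 => /eqP ->.
Qed.

Lemma psd_zero (I : finType) (M : mx R I I) i j : psd M -> M i i = 0 -> M i j = 0.
Proof.
move=> hM mii; have [->//|nij] := eqVneq j i.
apply/eqP/negP => /negP snz; set s := M i j in snz.
have sc : s^* != 0 by rewrite conjC_eq0.
have mj := psd_diag j hM; set m := M j j in mj.
have r0 : 0 <= (m + 1) / 2 by rewrite divr_ge0 // addr_ge0.
set r := (m + 1) / 2 in r0.
have rE : r = (m + 1) / 2 by [].
clearbody r.
have := hM (fun k => (0 + 1 * (k == j)%:R) + (- r / s^*) * (k == i)%:R).
rewrite -/(qf _ _) qf_two mii mulr0 addr0 (psd_herm i j hM) -/s.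
rewrite !(rmorphM, rmorphN, fmorphV) /= conjCK (geC0_conj r0) rmorph1 !mul1r mulr1.
have -> : m + - r * s^-1 * s + - r / s^* * s^* = m - r * 2.
  by rewrite -!mulrA !mulVf // !mulr1; rewrite mulr2n; ring.
by rewrite rE divfK ?pnatr_eq0 // opprD addrA subrr sub0r oppr_ge0 ler10.
Qed.

Lemma psd_schur (I : finType) (M : mx R I I) i0 : psd M -> M i0 i0 != 0 ->
  psd (fun k l => M k l - M k i0 * M i0 l / M i0 i0).
Proof.
move=> hM mnz v; set m := M i0 i0 in mnz *.
have mr : m^* = m by rewrite geC0_conj // psd_diag.
set b := \sum_l M i0 l * v l.
have hb : \sum_k (v k)^* * M k i0 = b^*.
  rewrite /b rmorph_sum; apply: eq_bigr => k _.
  by rewrite rmorphM /= (psd_herm i0 k hM) mulrC.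
have := hM (fun k => v k + (- b / m) * (k == i0)%:R).
rewrite -/(qf _ _) qf_add -/b hb.
rewrite !(rmorphM, rmorphN, fmorphV) /= mr.
have -> : qf M v + - b^* / m * b + - b / m * b^* + - b^* / m * (- b / m) * m
   = qf M v - b^* * b / m.
  by field.
suff -> : \sum_i \sum_j (v i)^* * (M i j - M i i0 * M i0 j / m) * v j = qf M v - b^* * b / m by [].
rewrite /qf -hb /b mulr_suml mulr_suml -sumrB; apply: eq_bigr => k _.
rewrite mulr_sumr mulr_suml -sumrB; apply: eq_bigr => l _.
by field.
Qed.

Lemma psd_decomp_gen (I : finType) n (D : {set I}) (M : mx R I I) :
  #|D| = n -> psd M -> (forall i j, i \notin D -> M i j = 0) ->
  exists w : I -> I -> C, (forall s i, s \notin D -> w s i = 0) /\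
    forall i j, M i j = \sum_s w s i * (w s j)^*.
Proof.
elim: n D M => [|n IH] D M hD hM hS.
  move/eqP: hD; rewrite cards_eq0 => /eqP hD0.
  exists (fun _ _ => 0); split => // i j.
  by rewrite hS ?hD0 ?inE // big1 // => s _; rewrite mul0r.
have [i0 i0D] : exists i0, i0 \in D.
  by apply/set0Pn; rewrite -card_gt0 hD.
set D' := D :\ i0.
have hD' : #|D'| = n by move: hD; rewrite (cardsD1 i0) i0D add1n => -[].
have sub' : forall s, s \notin D -> s \notin D'.
  by move=> s; apply: contra; rewrite inE => /andP[].
have [m0|mnz] := eqVneq (M i0 i0) 0.
  have hS' : forall i j, i \notin D' -> M i j = 0.
    move=> i j; rewrite !inE negb_and negbK => /orP[/eqP->|]; first exact: psd_zero.
    exact: hS.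
  have [w [w1 w2]] := IH D' M hD' hM hS'.
  by exists w; split=> // s i /sub'; apply: w1.
set m := M i0 i0 in mnz.
set r := sqrtC m.
have m0 : 0 <= m by apply: psd_diag.
have r0 : 0 <= r by rewrite sqrtC_ge0.
have rr : r * r = m by rewrite -expr2 sqrtCK.
have rnz : r != 0 by apply: contraNneq mnz => r0'; rewrite -rr r0' mulr0.
set M' := fun k l => M k l - M k i0 * M i0 l / m.
have hM' : psd M' by apply: psd_schur.
have hS' : forall i j, i \notin D' -> M' i j = 0.
  move=> i j; rewrite !inE negb_and negbK => /orP[/eqP->|iD].
    by rewrite /M' -/m mulrC mulrA mulVf // mul1r subrr.
  by rewrite /M' (hS i j) // (hS i i0) // !mul0r subrr.
have [w' [w1 w2]] := IH D' M' hD' hM' hS'.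
exists (fun s => if s == i0 then (fun k => M k i0 / r) else w' s); split.
  move=> s i sD; have -> : (s == i0) = false.
    by apply/negbTE; apply: contraNneq sD => ->.
  exact: w1 (sub' _ sD).
move=> i j; rewrite (bigD1 i0) //= eqxx.
have -> : \sum_(s | s != i0) (if s == i0 then (fun k => M k i0 / r) else w' s) i *
    ((if s == i0 then (fun k => M k i0 / r) else w' s) j)^* =
    \sum_(s | s != i0) w' s i * (w' s j)^*.
  by apply: eq_bigr => s /negbTE ->.
have : M' i j = \sum_s w' s i * (w' s j)^* by apply: w2.
rewrite (bigD1 i0) //= w1 ?inE ?eqxx // mul0r add0r => <-.
rewrite /M' (psd_herm j i0 hM) -/m rmorphM /= fmorphV /= (geC0_conj r0).
rewrite -rr; field; exact: rnz.
Qed.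

Lemma psd_decomp (I : finType) (M : mx R I I) : psd M ->
  exists w : I -> I -> C, forall i j, M i j = \sum_s w s i * (w s j)^*.
Proof.
move=> hM.
have hS : forall i j, i \notin [set: I] -> M i j = 0 by move=> i j; rewrite inE.
have [w [_ hw]] := @psd_decomp_gen I #|[set: I]| [set: I] M erefl hM hS.
by exists w.
Qed.




Lemma exch5 (S K L P Q : finType) (T : S -> K -> L -> P -> Q -> C) :
  \sum_s \sum_k \sum_l \sum_p \sum_q T s k l p q =
  \sum_p \sum_q \sum_s \sum_k \sum_l T s k l p q.
Proof.
have e1 : forall s k, \sum_l \sum_p \sum_q T s k l p q = \sum_p \sum_q \sum_l T s k l p q.
  move=> s k; rewrite exch2; apply: eq_bigr => p _; exact: exch2.
under eq_bigr do under eq_bigr do rewrite e1.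
have e2 : forall s, \sum_k \sum_p \sum_q \sum_l T s k l p q = \sum_p \sum_q \sum_k \sum_l T s k l p q.
  move=> s; rewrite exch2; apply: eq_bigr => p _; exact: exch2.
under eq_bigr do rewrite e2.
rewrite exch2; apply: eq_bigr => p _; exact: exch2.
Qed.

Lemma sum3_mul (S K L : finType) (Y : S -> K -> L -> C) a b :
  a * (\sum_s \sum_k \sum_l Y s k l) * b = \sum_s \sum_k \sum_l a * Y s k l * b.
Proof.
rewrite mulr_sumr mulr_suml; apply: eq_bigr => s _.
rewrite mulr_sumr mulr_suml; apply: eq_bigr => k _.
by rewrite mulr_sumr mulr_suml; apply: eq_bigr => l _.
Qed.

Lemma psd_congr (K P S : finType) (rho : mx R K K) (B : S -> K -> P -> C)
  (F : mx R P P) : psd rho ->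
  (forall p q, F p q = \sum_s \sum_k \sum_l (B s k p)^* * rho k l * B s l q) ->
  psd F.
Proof.
move=> hr hF v.
have -> : \sum_p \sum_q (v p)^* * F p q * v q =
    \sum_s qf rho (fun k => \sum_q B s k q * v q).
  rewrite /qf; symmetry.
  have E : forall s k l, (\sum_p B s k p * v p)^* * rho k l * (\sum_q B s l q * v q)
     = \sum_p \sum_q (v p)^* * ((B s k p)^* * rho k l * B s l q) * v q.
    move=> s k l; rewrite rmorph_sum mulr_suml mulr_suml; apply: eq_bigr => p _.
    rewrite mulr_sumr; apply: eq_bigr => q _.
    by rewrite rmorphM /=; ring.
  under eq_bigr do under eq_bigr do under eq_bigr do rewrite E.
  rewrite exch5; apply: eq_bigr => p _; apply: eq_bigr => q _.
  by rewrite hF sum3_mul.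
apply: sumr_ge0 => s _; exact: hr.
Qed.



Definition KU (X A S : finType) (U : mx R (A * S) X) x x' a a' :=
  \sum_s (U (a, s) x)^* * U (a', s) x'.

Definition slin (H : finType) (sigma : mx R H H -> C) :=
  forall (a : C) (S T : mx R H H),
        sigma (fun x y => a * S x y + T x y) = a * sigma S + sigma T.

Lemma slin0 (H : finType) (sigma : mx R H H -> C) : slin sigma ->
  sigma (fun _ _ => 0) = 0.
Proof.
move=> hl; have := hl 1 (fun _ _ => 0) (fun _ _ => 0).
have -> : (fun x y : H => 1 * (fun _ _ => 0 : C) x y + (fun _ _ => 0 : C) x y) = (fun _ _ => 0).
  by apply: functional_extensionality => x; apply: functional_extensionality => y; rewrite mulr0 addr0.
rewrite mul1r => h.
by rewrite -[LHS](addrK (sigma (fun _ _ => 0))) -h subrr.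
Qed.

Lemma slin_sum (H J : finType) (sigma : mx R H H -> C) (c : J -> C) (F : J -> mx R H H) :
  slin sigma ->
  sigma (fun x y => \sum_i c i * F i x y) = \sum_i c i * sigma (F i).
Proof.
move=> hl; rewrite /index_enum; elim: (Finite.enum J) => [|j r IH].
  rewrite big_nil.
  have -> : (fun x y : H => \sum_(i <- [::]) c i * F i x y) = (fun _ _ => 0).
    by apply: functional_extensionality => x; apply: functional_extensionality => y; rewrite big_nil.
  exact: slin0.
have -> : (fun x y : H => \sum_(i <- j :: r) c i * F i x y) =
    (fun x y => c j * F j x y + (fun x y => \sum_(i <- r) c i * F i x y) x y).
  by apply: functional_extensionality => x; apply: functional_extensionality => y; rewrite big_cons.
by rewrite hl IH big_cons.
Qed.

Lemma mxmul_locW (X Y A B I : finType) (S T : I -> finType)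
    (U : forall i, mx R (A * S i) X) (V : forall i, mx R (B * T i) Y) p q z z' :
  mxmul (adj (locW U V p z)) (locW U V q z') =
  (fun j j' => \sum_i (KU (U i) z.1 z'.1 p.1 q.1 * KU (V i) z.2 z'.2 p.2 q.2) * eunit R i i j j').
Proof.
apply: functional_extensionality => j; apply: functional_extensionality => j'.
rewrite /mxmul /adj /locW /eunit.
rewrite -(sig_big_dep (fun _ => true) (fun _ _ => true)
  (fun i (st : S i * T i) => conjc ((i == j)%:R * U i (p.1, st.1) z.1 * V i (p.2, st.2) z.2)
     * ((i == j')%:R * U i (q.1, st.1) z'.1 * V i (q.2, st.2) z'.2))).
apply: eq_bigr => i _.
have E : KU (U i) z.1 z'.1 p.1 q.1 * KU (V i) z.2 z'.2 p.2 q.2 =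
   \sum_(st : S i * T i) (U i (p.1, st.1) z.1)^* * U i (q.1, st.1) z'.1 *
       ((V i (p.2, st.2) z.2)^* * V i (q.2, st.2) z'.2).
  by rewrite /KU mulr_suml; under eq_bigr do rewrite mulr_sumr; rewrite pair_bigA.
rewrite E mulr_suml; apply: eq_bigr => st _.
rewrite conjcE !rmorphM /= conjC_nat (eq_sym j) (eq_sym j').
by case: (i == j); case: (i == j'); rewrite /= ?mulr1n ?mulr0n; ring.
Qed.
Lemma sum4_pair (X Y : finType) (f : X -> X -> Y -> Y -> C) :
  \sum_x \sum_x' \sum_y \sum_y' f x x' y y' =
  \sum_(z : X * Y) \sum_(z' : X * Y) f z.1 z'.1 z.2 z'.2.
Proof.
under eq_bigr do rewrite exch2.
rewrite pair_bigA; apply: eq_bigr => z _.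
by rewrite pair_bigA.
Qed.

Lemma gamma_loc (X Y A B I : finType) (S T : I -> finType)
    (U : forall i, mx R (A * S i) X) (V : forall i, mx R (B * T i) Y)
    (sigma : mx R I I -> C) rho p q : slin sigma ->
  Gamma (locW U V) sigma rho p q =
  \sum_i sigma (eunit R i i) * \sum_x \sum_x' \sum_y \sum_y'
     rho (x, y) (x', y') * KU (U i) x x' p.1 q.1 * KU (V i) y y' p.2 q.2.
Proof.
move=> hl; rewrite /Gamma.
under eq_bigr do under eq_bigr do rewrite mxmul_locW
  (slin_sum (fun i => KU (U i) _ _ p.1 q.1 * KU (V i) _ _ p.2 q.2) (fun i => eunit R i i) hl) mulr_sumr.
under eq_bigr do rewrite exch2.
rewrite exch2; apply: eq_bigr => i _.
rewrite sum4_pair.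
rewrite mulr_sumr; apply: eq_bigr => z _.
rewrite mulr_sumr; apply: eq_bigr => z' _.
by case: z => x y; case: z' => x' y' /=; ring.
Qed.



Lemma sum_pairE (I J : finType) (G : I * J -> C) :
  \sum_k G k = \sum_i \sum_j G (i, j).
Proof. by rewrite pair_bigA; apply: eq_bigr => -[i j]. Qed.

Lemma pair_delta (I J : finType) (G : I * J -> C) i :
  \sum_l (l.1 == i)%:R * G l = \sum_j G (i, j).
Proof.
rewrite sum_pairE /=; under eq_bigr do rewrite -mulr_sumr.
exact: sum_dl.
Qed.

Lemma rev3 (I J K : finType) (F : I -> J -> K -> C) :
  \sum_a \sum_b \sum_c F a b c = \sum_c \sum_b \sum_a F a b c.
Proof.
under eq_bigr do rewrite exch2.
rewrite exch2; apply: eq_bigr => c _; exact: exch2.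
Qed.

Definition kchan (X A S : finType) (U : mx R (A * S) X) : mx R X X -> mx R A A :=
  fun rho a a' => \sum_x \sum_x' rho x x' * KU U x x' a a'.

Lemma kchan_eunit (X A S : finType) (U : mx R (A * S) X) x x' a a' :
  kchan U (eunit R x x') a a' = KU U x x' a a'.
Proof.
rewrite /kchan /eunit (bigD1 x) //= [X in _ + X]big1; last first.
  move=> y hy; rewrite big1 // => y' _.
  by rewrite (negbTE hy) mul0r.
rewrite addr0 (bigD1 x') //= [X in _ + X]big1; last first.
  by move=> y hy; rewrite (negbTE hy) andbF mul0r.
by rewrite !eqxx mul1r addr0.
Qed.

Lemma kchan_channel (X A S : finType) (U : mx R (A * S) X) :
  isometry U -> quantum_channel (kchan U).
Proof.
move=> hU; split.
- move=> a rho sigma j j'; rewrite /kchan mulr_sumr -big_split; apply: eq_bigr => x _.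
  rewrite mulr_sumr -big_split; apply: eq_bigr => x' _; by rewrite /= mulrDl mulrA.
- move=> n rho hr.
  apply: (psd_congr (B := fun s (k : 'I_n * X) (p : 'I_n * A) =>
      (k.1 == p.1)%:R * U (p.2, s) k.2) hr) => p q.
  have E : forall s, \sum_k \sum_l ((k.1 == p.1)%:R * U (p.2, s) k.2)^* * rho k l *
      ((l.1 == q.1)%:R * U (q.2, s) l.2) =
      \sum_x' (U (p.2, s) x')^* * \sum_x rho (p.1, x') (q.1, x) * U (q.2, s) x.
    move=> s.
    under eq_bigr => k _ do under eq_bigr => l _ do rewrite -mulrA.
    under eq_bigr => k _ do rewrite -mulr_sumr.
    under eq_bigr => k _ do under eq_bigr => l _ do rewrite mulrCA.
    under eq_bigr => k _ do rewrite pair_delta rmorphM /= conjC_nat -mulrA.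
    by rewrite pair_delta.
  under [RHS]eq_bigr do rewrite E.
  rewrite /kchan /KU /=.
  under eq_bigr do under eq_bigr do rewrite mulr_sumr.
  under [RHS]eq_bigr do under eq_bigr do rewrite mulr_sumr.
  rewrite exch2; under eq_bigr do rewrite exch2.
  under eq_bigr do rewrite exch2.
  rewrite rev3; apply: eq_bigr => s _; apply: eq_bigr => x' _; apply: eq_bigr => x _.
  rewrite /=; ring.
- move=> rho; rewrite /mtr /kchan.
  rewrite exch2; apply: eq_bigr => x _.
  rewrite exch2.
  under eq_bigr do rewrite -mulr_sumr.
  have K x' : \sum_a KU U x x' a a = (x == x')%:R.
    by rewrite -[(x == x')%:R]/(idm R x x') -(hU x x') /mxmul /adj sum_pairE.
  under eq_bigr do rewrite K.
  under eq_bigr do rewrite eq_sym.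
  by rewrite sum_dr.
Qed.
Lemma sum_unit (F : unit -> C) : \sum_i F i = F tt.
Proof. by rewrite (bigD1 tt) //= big1 ?addr0 // => -[]. Qed.

Lemma choi (X A : finType) (Phi : mx R X X -> mx R A A) : quantum_channel Phi ->
  exists U : mx R (A * ('I_#|X| * A)) X, isometry U /\
    forall x x' a a', Phi (eunit R x x') a a' = KU U x x' a a'.
Proof.
case=> hlin hcp htp.
pose rho : mx R ('I_#|X| * X) ('I_#|X| * X) :=
  fun p q => eunit R (enum_val p.1) (enum_val q.1) p.2 q.2.
have hr0 : psd (fun _ _ : unit => 1 : C).
  move=> v; rewrite sum_unit sum_unit mulr1 mulrC; exact: mul_conjC_ge0.
have hrho : psd rho.
  apply: (psd_congr (S := unit) (B := fun _ _ p => (p.2 == enum_val p.1)%:R) hr0).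
  move=> p q; rewrite !sum_unit mulr1 conjC_nat /rho /eunit.
  by case: (p.2 == _); case: (q.2 == _); rewrite /= ?mulr1n ?mulr0n ?mulr1 ?mulr0.
have [w hw] := psd_decomp (hcp _ rho hrho).
exists (fun k x => (w k.2 (enum_rank x, k.1))^*).
have KE : forall x x' a a', Phi (eunit R x x') a a' =
    KU (fun k x => (w k.2 (enum_rank x, k.1))^*) x x' a a'.
  move=> x x' a a'; rewrite /KU /=.
  under eq_bigr do rewrite conjCK.
  by rewrite -(hw (enum_rank x, a) (enum_rank x', a')) /rho /= !enum_rankK.
split=> // x x'.
rewrite /mxmul /adj sum_pairE /=.
have -> : \sum_a \sum_s conjc ((w s (enum_rank x, a))^*) * (w s (enum_rank x', a))^* =
  \sum_a Phi (eunit R x x') a a by apply: eq_bigr => a _; rewrite KE.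
rewrite -/(mtr _) htp /mtr /eunit /idm.
have [<-|nxx] := eqVneq x x'.
  under eq_bigr do rewrite andbb -[(_ == x)%:R]mulr1.
  by rewrite sum_dl.
rewrite big1 // => i _.
by case: eqP => // ->; rewrite (negbTE nxx).
Qed.

Lemma mxmul_eunit (I : finType) (j : I) :
  mxmul (adj (eunit R j j)) (eunit R j j) = eunit R j j.
Proof.
apply: functional_extensionality => k; apply: functional_extensionality => l.
rewrite /mxmul /adj /eunit (bigD1 j) //= big1 => [|m /negbTE ->]; last first.
  by rewrite /= mulr0.
rewrite eqxx /= addr0 conjcE conjC_nat.
by case: (k == j); case: (l == j); rewrite /= ?mulr1n ?mulr0n ?mulr1 ?mulr0.
Qed.

Lemma idm_sum (I : finType) : @idm R I = (fun x y => \sum_(j : I) 1 * eunit R j j x y).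
Proof.
apply: functional_extensionality => x; apply: functional_extensionality => y.
rewrite /idm /eunit; have [<-|nxy] := eqVneq x y.
  under eq_bigr do rewrite mul1r andbb eq_sym -[((_ == _)%:R)]mulr1.
  by rewrite sum_dl.
rewrite big1 // => i _; rewrite mul1r.
have [<-|nxi] := eqVneq x i; first by rewrite eq_sym (negbTE nxy).
by [].
Qed.

End S.

Theorem proposition5p1 (R : realType) (X Y A B : finType)
  (hX : (0 < #|X|)%N) (hY : (0 < #|Y|)%N) (hA : (0 < #|A|)%N) (hB : (0 < #|B|)%N)
  (Phi : mx R (X * Y) (X * Y) -> mx R (A * B) (A * B)) :
  QC_Rloc Phi <-> Qloc Phi.
Proof.
split.
- case=> I [S [T [U [V [sigma [hU hV [hlin hpos hone] hPhi]]]]]].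
  have sge : forall j, 0 <= sigma (eunit R j j).
    by move=> j; have := hpos (eunit R j j); rewrite mxmul_eunit.
  pose lam j := complex.Re (sigma (eunit R j j)).
  have lamC : forall j, ((lam j)%:C)%C = sigma (eunit R j j).
    move=> j; have := sge j; rewrite /lam; case: (sigma _) => a b.
    by rewrite lecE /= => /andP[/eqP -> _].
  exists I, lam, (fun j => kchan (U j)), (fun j => kchan (V j)); split.
  + move=> j; have := sge j; rewrite /lam; case: (sigma _) => a b.
    by rewrite lecE /= => /andP[_ ->].
  + apply: (@complexI R); rewrite rmorph_sum /=.
    under eq_bigr do rewrite lamC.
    under eq_bigr do rewrite -[sigma _]mul1r.
    rewrite -(slin_sum (fun _ => 1) (fun i => eunit R i i) hlin).
    by rewrite -idm_sum hone.
  + by move=> j; apply: kchan_channel.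
  + by move=> j; apply: kchan_channel.
  + move=> rho p q; rewrite hPhi gamma_loc //; apply: eq_bigr => j _.
    rewrite lamC; congr (_ * _); rewrite /tensor_map.
    apply: eq_bigr => x _; apply: eq_bigr => x' _; apply: eq_bigr => y _.
    by apply: eq_bigr => y' _; rewrite !kchan_eunit.
- case=> J [lam [Phis [Psis [hl0 hl1 hP hQ hPhi]]]].
  have eU := fun j => choi (hP j).
  have eV := fun j => choi (hQ j).
  pose Uf j := proj1_sig (constructive_indefinite_description _ (eU j)).
  pose Vf j := proj1_sig (constructive_indefinite_description _ (eV j)).
  have hU : forall j, isometry (Uf j) /\ forall x x' a a',
      Phis j (eunit R x x') a a' = KU (Uf j) x x' a a'.
    by move=> j; exact: (proj2_sig (constructive_indefinite_description _ (eU j))).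
  have hV : forall j, isometry (Vf j) /\ forall y y' b b',
      Psis j (eunit R y y') b b' = KU (Vf j) y y' b b'.
    by move=> j; exact: (proj2_sig (constructive_indefinite_description _ (eV j))).
  pose sigma (M : mx R J J) := \sum_j ((lam j)%:C)%C * M j j.
  have hl : slin sigma.
    move=> a S T; rewrite /sigma mulr_sumr -big_split; apply: eq_bigr => j _ /=; ring.
  have sE : forall j, sigma (eunit R j j) = ((lam j)%:C)%C.
    move=> j; rewrite /sigma /eunit (bigD1 j) //= eqxx mulr1 big1 ?addr0 // => i /negbTE ->.
    by rewrite mulr0.
  exists J, (fun _ => ('I_#|X| * A)%type), (fun _ => ('I_#|Y| * B)%type), Uf, Vf, sigma.
  split.
  + by move=> j; case: (hU j).
  + by move=> j; case: (hV j).
  + split => //.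
    * move=> M; apply: sumr_ge0 => j _; apply: mulr_ge0; first by rewrite ler0c.
      apply: sumr_ge0 => k _; rewrite /adj conjcE mulrC; exact: mul_conjC_ge0.
    * rewrite /sigma /idm.
      under eq_bigr do rewrite eqxx mulr1.
      by rewrite -rmorph_sum /= hl1.
  + move=> rho p q; rewrite hPhi gamma_loc //; apply: eq_bigr => j _.
    rewrite sE; congr (_ * _); rewrite /tensor_map.
    apply: eq_bigr => x _; apply: eq_bigr => x' _; apply: eq_bigr => y _.
    by apply: eq_bigr => y' _; rewrite (proj2 (hU j)) (proj2 (hV j)).
Qed.
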